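(* Let $h>0$ and let $f\in H^\omega(X)\cap L_{\mathrm{loc}}(X)$. Then \[ \|f-S_hf\|_{\mathcal{B}(X)}\le\frac{\|f\|_{H^\omega(X)}}{\mu(B_h)}\int_{B_h}\omega(\rho(u,\theta))\,d\mu(u). \] The inequality is sharp: for every $c\in\mathbb R$ the functions $f_\omega(x)=c\pm\omega(\rho(x,\theta))$ belong to $H^\omega(X)$, satisfy $\|f_\omega\|_{H^\omega(X)}=1$, and turn the inequality into an equality.
   Context: Standing setting: $(X,\rho)$ is a metric space with a Borel measure $\mu$. $X$ is a commutative monoid, i.e. there is an associative and commutative binary operation $+$ on $X$ with a neutral element $\theta$ ($x+\theta=x$ for all $x$). The measure is translation invariant: $\mu(x+Q)=\mu(Q)$ for every $\mu$-measurable $Q\subset X$ and every $x\in X$; correspondingly $\int_{B_h}g(x+u)\,d\mu(u)=\int_{x+B_h}g(u)\,d\mu(u)$ for locally integrable $g$. Moreover $\rho(x+y,x)\le\rho(y,\theta)$ for all $x,y\in X$. $B_h$ denotes the open ball of radius $h$ centered at $\theta$, and it is assumed that $0<\mu(B_h)<\infty$ and $B_h\neq\{\theta\}$ for every $h>0$. Every continuous real function on $X$ is integrable on every open ball. $L_{\mathrm{loc}}(X)$ is the space of functions $f\colon X\to\mathbb R$ integrable on every open ball. For a bounded function $f$, $\|f\|_{\mathcal B(X)}=\sup_{x\in X}|f(x)|$. A modulus of continuity is a function $\omega\colon[0,\infty)\to[0,\infty)$ that is non-decreasing, semi-additive ($\omega(s+t)\le\omega(s)+\omega(t)$), with $\omega(0)=0$,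 and not identically zero (so $\omega(t)>0$ for $t>0$). $H^\omega(X)$ is the space of $f\colon X\to\mathbb R$ with $\|f\|_{H^\omega(X)}:=\sup_{x\neq y}\frac{|f(x)-f(y)|}{\omega(\rho(x,y))}<\infty$. For $h>0$ and $f\in L_{\mathrm{loc}}(X)$, $S_hf(x)=\frac{1}{\mu(B_h)}\int_{B_h}f(x+u)\,d\mu(u)$. *)

(* Defs.v *)
From HB Require Import structures.
From mathcomp Require Import all_boot all_order all_algebra.
From mathcomp Require Import all_classical all_reals all_analysis.
Set Implicit Arguments. Unset Strict Implicit. Unset Printing Implicit Defensive.
Import Order.TTheory GRing.Theory Num.Theory.
Import numFieldNormedType.Exports.
Local Open Scope classical_set_scope.
Local Open Scope ring_scope.

Section Defs.
Variables (R : realType) (X : Type).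
Variable rho : X -> X -> R.

Definition rball (x : X) (r : R) : set X := [set y | rho x y < r].

Definition ropen (A : set X) : Prop :=
  forall x, A x -> exists2 r : R, 0 < r & rball x r `<=` A.

Definition rcontinuous (g : X -> R) : Prop :=
  forall x (e : R), 0 < e -> exists2 del : R, 0 < del &
    forall y, rho x y < del -> `|g y - g x| < e.

Definition is_metric : Prop :=
  [/\ forall x y, 0 <= rho x y,
      forall x y, rho x y = 0 <-> x = y,
      forall x y, rho x y = rho y x &
      forall x y z, rho x z <= rho x y + rho y z].

Definition modulus (omega : R -> R) : Prop :=
  [/\ forall t, 0 <= t -> 0 <= omega t,
      forall s t, 0 <= s -> s <= t -> omega s <= omega t,
      forall s t, 0 <= s -> 0 <= t -> omega (s + t) <= omega s + omega t,
      omega 0 = 0 &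
      exists2 t, 0 <= t & omega t <> 0].

Definition Hnorm_e (omega : R -> R) (f : X -> R) : \bar R :=
  ereal_sup [set z | exists x y, x <> y /\
                     z = ((`|f x - f y| / omega (rho x y))%:E)].
Definition in_Homega (omega : R -> R) (f : X -> R) : Prop :=
  (Hnorm_e omega f < +oo)%E.
Definition Hnorm (omega : R -> R) (f : X -> R) : R := fine (Hnorm_e omega f).

End Defs.

(* sup norm ||g||_{B(X)}, valued in extended reals (+oo if unbounded) *)
Definition Bnorm_e (R : realType) (X : Type) (g : X -> R) : \bar R :=
  ereal_sup [set (`|g x|)%:E | x in [set: X]].

Section MeasDefs.
Variables (R : realType) (d : measure_display) (X : measurableType d).
Variables (rho : X -> X -> R) (plus : X -> X -> X) (theta : X).
Variable (mu : {measure set X -> \bar R}).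

Definition Bh (h : R) : set X := rball rho theta h.

Definition Lloc (f : X -> R) : Prop :=
  forall x (r : R), 0 < r -> mu.-integrable (rball rho x r) (EFin \o f).

Definition Sh (h : R) (f : X -> R) (x : X) : R :=
  (fine (mu (Bh h)))^-1 * Rintegral mu (Bh h) (fun u => f (plus x u)).

Definition standing_setting : Prop :=
  is_metric rho /\
  [/\ (* mu is a Borel measure: measurable sets = Borel sets of rho *)
      @measurable d X = <<s ropen rho >>,
      [/\ forall x y z, plus x (plus y z) = plus (plus x y) z,
          forall x y, plus x y = plus y x &
          forall x, plus x theta = x],
      forall (Q : set X) x, measurable Q ->
        measurable (plus x @` Q) /\ mu (plus x @` Q) = mu Q,
      forall (g : X -> R) x (h : R), 0 < h -> Lloc g ->
        (\int[mu]_(u in Bh h) (g (plus x u))%:E =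
         \int[mu]_(u in plus x @` Bh h) (g u)%:E)%E &
      [/\ forall x y, rho (plus x y) x <= rho y theta,
          forall h : R, 0 < h -> (0 < mu (Bh h) < +oo)%E /\ Bh h <> [set theta] &
          forall g : X -> R, rcontinuous rho g ->
            forall x (r : R), 0 < r -> mu.-integrable (rball rho x r) (EFin \o g)]].

End MeasDefs.

(* Main.v *)
Require Import Defs.
From HB Require Import structures.
From mathcomp Require Import all_boot all_order all_algebra.
From mathcomp Require Import all_classical all_reals all_analysis.
From mathcomp Require Import measurable_realfun.
Import Order.TTheory GRing.Theory Num.Theory.
Local Open Scope classical_set_scope.
Local Open Scope ring_scope.
Set Implicit Arguments. Unset Strict Implicit.

Lemma nm_le_integral d (T : measurableType d) (R : realType)
  (mu : {measure set T -> \bar R}) (D : set T) (f g : T -> \bar R) :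
  (forall x, D x -> (0 <= f x)%E) -> (forall x, D x -> (f x <= g x)%E) ->
  (\int[mu]_(x in D) f x <= \int[mu]_(x in D) g x)%E.
Proof.
move=> f0 fg.
have g0 : forall x, D x -> (0 <= g x)%E by move=> x Dx; exact: le_trans (f0 x Dx) (fg x Dx).
rewrite (ge0_integralE _ f0) (ge0_integralE _ g0).
apply: ereal_sup_le => _ [h /= hf <-]; exists h => //= x.
apply: le_trans (hf x) _; rewrite /patch; case: ifP => // /set_mem Dx.
exact: fg.
Qed.


Lemma omega_pos (R : realType) (omega : R -> R) : modulus omega ->
  forall t, 0 < t -> 0 < omega t.
Proof.
case=> o0 mono sub om0 [t0 t0ge ot0] t t0p.
have mult : forall n, omega (t *+ n) <= omega t *+ n.
  elim=> [|n IH]; first by rewrite !mulr0n om0.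
  rewrite !mulrS; apply: le_trans (sub _ _ (ltW t0p) (mulrn_wge0 _ (ltW t0p))) _.
  by rewrite lerD2l.
have t0p' : 0 < t0.
  rewrite lt_neqAle t0ge andbT; apply/eqP => e; apply: ot0; by rewrite -e.
have ot0p : 0 < omega t0 by rewrite lt_neqAle o0 // andbT eq_sym; apply/eqP.
have hb := @archi_boundP R (t0 / t) (divr_ge0 (ltW t0p') (ltW t0p)).
have : t0 <= t *+ Num.bound (t0 / t).
  rewrite -mulr_natr -ler_pdivrMl // mulrC ltW //.
move/(mono _ _ t0ge) => h.
have := lt_le_trans ot0p (le_trans h (mult _)).
have [e|ne] := eqVneq (omega t) 0; first by rewrite e mul0rn ltxx.
by move=> _; rewrite lt_neqAle eq_sym ne o0 // ltW.
Qed.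


Lemma ball_open (R : realType) (X : Type) (rho : X -> X -> R) :
  is_metric rho -> forall x r, ropen rho (rball rho x r).
Proof.
case=> r0 r00 rs rt x r y /= xy; exists (r - rho x y); first by rewrite subr_gt0.
move=> z /= yz; apply: le_lt_trans (rt x y z) _; by rewrite -ltrBrDl.
Qed.

Lemma gt_open (R : realType) (X : Type) (rho : X -> X -> R) :
  is_metric rho -> forall z a, ropen rho [set u | a < rho u z].
Proof.
case=> r0 r00 rs rt z a y /= ay; exists (rho y z - a); first by rewrite subr_gt0.
move=> w /= yw; have := rt y w z; rewrite -lerBlDl => h.
apply: lt_le_trans h; by rewrite ltrBrDl addrC -ltrBrDl.
Qed.

Lemma meas_rho (R : realType) (d : measure_display) (X : measurableType d)
  (rho : X -> X -> R) (plus : X -> X -> X) (theta : X)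
  (mu : {measure set X -> \bar R}) :
  standing_setting rho plus theta mu -> forall z,
  measurable_fun setT (fun u => rho u z).
Proof.
move=> [met [mE _ _ _ _]] z.
apply: (measurability _ (measurable_realfun.RGenOInfty.measurableE R)) => //.
move=> /= _ [_ [a ->] <-]; rewrite setTI.
have -> : (fun u => rho u z) @^-1` `]a, +oo[ = [set u | a < rho u z].
  by apply/seteqP; split => u /=; rewrite in_itv /= andbT.
rewrite mE; apply: sub_sigma_algebra; exact: gt_open.
Qed.

Lemma meas_ball (R : realType) (d : measure_display) (X : measurableType d)
  (rho : X -> X -> R) (plus : X -> X -> X) (theta : X)
  (mu : {measure set X -> \bar R}) :
  standing_setting rho plus theta mu -> forall x r,
  measurable (rball rho x r).
Proof.
move=> [met [mE _ _ _ _]] x r.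
rewrite mE; apply: sub_sigma_algebra; exact: ball_open.
Qed.

Lemma meas_om (R : realType) (d : measure_display) (X : measurableType d)
  (rho : X -> X -> R) (plus : X -> X -> X) (theta : X)
  (mu : {measure set X -> \bar R}) (omega : R -> R) :
  standing_setting rho plus theta mu -> modulus omega ->
  measurable_fun setT (fun u => omega (rho u theta)).
Proof.
move=> hst; case=> o0 hmono _ _ _.
have met : is_metric rho by case: hst.
have -> : (fun u => omega (rho u theta)) =
   (fun t => omega (Num.max t 0)) \o (fun u => rho u theta).
  apply/funext => u /=; congr omega; case: met => r0 _ _ _.
  by rewrite max_l // r0.
apply: measurableT_comp; last exact: meas_rho hst theta.
apply: measurable_realfun.nondecreasing_measurable => // s t st'.
apply: hmono; first by rewrite le_max lexx orbT.
by rewrite ge_max !le_max st' lexx !orbT.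
Qed.


Lemma cst_int (R : realType) (d : measure_display) (X : measurableType d)
  (rho : X -> X -> R) (plus : X -> X -> X) (theta : X)
  (mu : {measure set X -> \bar R}) :
  standing_setting rho plus theta mu -> forall (k : R) x r, 0 < r ->
  mu.-integrable (rball rho x r) (EFin \o (fun _ => k)).
Proof.
move=> [_ [_ _ _ _ [_ _ hc]]] k x r r0; apply: hc => //.
move=> y e e0; exists 1 => // z _; by rewrite subrr normr0.
Qed.

Lemma om_int (R : realType) (d : measure_display) (X : measurableType d)
  (rho : X -> X -> R) (plus : X -> X -> X) (theta : X)
  (mu : {measure set X -> \bar R}) (omega : R -> R) :
  standing_setting rho plus theta mu -> modulus omega ->
  forall x r, 0 < r ->
  mu.-integrable (rball rho x r) (EFin \o (fun u => omega (rho u theta))).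
Proof.
move=> hst hm x r r0.
have met : is_metric rho by case: hst.
case: (met) => rp _ rs rt.
case: (hm) => o0 hmono _ _ _.
eapply (@le_integrable _ _ _ mu _ (meas_ball hst x r) _ (EFin \o (fun _ => omega (r + rho x theta)))); last first.
  exact: (cst_int hst _ x r0).
  move=> u /= xu; rewrite !lee_fin ger0_norm ?o0 // ger0_norm; last first.
    by apply: o0; rewrite addr_ge0 // ltW.
  apply: hmono => //; apply: le_trans (rt u x theta) _.
  by rewrite lerD2r rs ltW.
apply/measurable_EFinP; apply: (measurable_funS measurableT) => //.
exact: meas_om hst hm.
Qed.

Lemma ball_fin (R : realType) (d : measure_display) (X : measurableType d)
  (rho : X -> X -> R) (plus : X -> X -> X) (theta : X)
  (mu : {measure set X -> \bar R}) :
  standing_setting rho plus theta mu -> forall x r, 0 < r ->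
  (mu (rball rho x r) < +oo)%E.
Proof.
move=> hst x r r0.
have /integrableP [_ h] := cst_int hst 1 x r0.
move: h; rewrite /= normr1 integral_cst ?mul1e //; exact: meas_ball hst x r.
Qed.


Lemma rho_pos (R : realType) (X : Type) (rho : X -> X -> R) :
  is_metric rho -> forall x y, x <> y -> 0 < rho x y.
Proof.
case=> rp r0 _ _ x y xy; rewrite lt_neqAle rp andbT eq_sym.
by apply/eqP => /r0.
Qed.

Lemma Hnorm_props (R : realType) (X : Type) (rho : X -> X -> R) (omega : R -> R)
  (f : X -> R) :
  is_metric rho -> modulus omega -> (exists x0 y0 : X, x0 <> y0) ->
  in_Homega rho omega f ->
  [/\ Hnorm_e rho omega f = (Hnorm rho omega f)%:E, 0 <= Hnorm rho omega f &
      forall x y, `|f x - f y| <= Hnorm rho omega f * omega (rho x y)].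
Proof.
move=> met hm [x0 [y0 xy0]] hf.
have rat_le : forall x y, x <> y ->
    ((`|f x - f y| / omega (rho x y))%:E <= Hnorm_e rho omega f)%E.
  by move=> x y xy; apply: ereal_sup_ubound; exists x, y.
have rat_ge0 : forall x y, 0 <= `|f x - f y| / omega (rho x y).
  move=> x y; rewrite divr_ge0 //; case: hm => o0 _ _ _ _; apply: o0.
  by case: met.
have fin : Hnorm_e rho omega f \is a fin_num.
  rewrite fin_numE; apply/andP; split; last by rewrite lt_eqF.
  apply/negP => /eqP e; have := rat_le _ _ xy0; rewrite e leeNy_eq //.
have E : Hnorm_e rho omega f = (Hnorm rho omega f)%:E by rewrite /Hnorm fineK.
have H0 : 0 <= Hnorm rho omega f.
  by rewrite -lee_fin -E; apply: le_trans (rat_le _ _ xy0); rewrite lee_fin.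
split => // x y.
have [->|xy] := pselect (x = y).
  rewrite subrr normr0; case: met => _ r0 _ _; rewrite (proj2 (r0 y y) erefl).
  by case: hm => _ _ _ -> _; rewrite mulr0.
have p := omega_pos hm (rho_pos met xy).
move: (rat_le x y xy); rewrite E lee_fin ler_pdivrMr //.
Qed.

Unset Implicit Arguments. Set Strict Implicit.


Theorem lemma1 (R : realType) (d : measure_display) (X : measurableType d)
  (rho : X -> X -> R) (plus : X -> X -> X) (theta : X)
  (mu : {measure set X -> \bar R}) (omega : R -> R) :
  standing_setting rho plus theta mu -> modulus omega ->
  forall h : R, 0 < h ->
  (forall f : X -> R, in_Homega rho omega f -> Lloc rho mu f ->
     (Bnorm_e (fun x => (f x - Sh rho plus theta mu h f x)%R) <=
      (Hnorm rho omega f / fine (mu (Bh rho theta h)))%:E *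
        \int[mu]_(u in Bh rho theta h) (omega (rho u theta))%:E)%E) /\
  (forall (c sgn : R), sgn = 1 \/ sgn = -1 ->
     let fw := fun x => c + sgn * omega (rho x theta) in
     [/\ in_Homega rho omega fw,
         Hnorm rho omega fw = 1 &
         Bnorm_e (fun x => fw x - Sh rho plus theta mu h fw x) =
           ((Hnorm rho omega fw / fine (mu (Bh rho theta h)))%:E *
             \int[mu]_(u in Bh rho theta h) (omega (rho u theta))%:E)%E]).
Proof.
move=> hst hm h h0.
have met : is_metric rho by case: hst.
case: (met) => rp r00 rs rt.
case: (hst) => _ [mE [pA pC p0] trans trint [rplus hB hcont]].
have [/andP [muB0 muBoo] BneT] := hB h h0.
have mB : measurable (Bh rho theta h) := meas_ball hst theta h.
set m := fine (mu (Bh rho theta h)).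
have muBE : mu (Bh rho theta h) = m%:E.
  by rewrite /m fineK // ge0_fin_numE // ltW.
have m0 : 0 < m by rewrite -lte_fin -muBE.
have [u0 [Bu0 u0t]] : exists u, Bh rho theta h u /\ u <> theta.
  apply: contrapT => nE; apply: BneT; apply/seteqP; split => [u Bu|_ ->].
    by apply: contrapT => ut; apply: nE; exists u.
  by rewrite /Bh /rball /= (proj2 (r00 theta theta) erefl).
have two : exists x0 y0 : X, x0 <> y0 by exists u0, theta.
pose om := fun u => omega (rho u theta).
have omI : mu.-integrable (Bh rho theta h) (EFin \o om) := om_int hst hm theta h0.
set Ir := Rintegral mu (Bh rho theta h) om.
have IE : (\int[mu]_(u in Bh rho theta h) (omega (rho u theta))%:E)%E = Ir%:E.
  by rewrite /Ir /Rintegral fineK //; exact: integrable_fin_num.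
have o0 : forall t, 0 <= t -> 0 <= omega t by case: hm.
have hmono : forall s t, 0 <= s -> s <= t -> omega s <= omega t by case: hm.
have Ir0 : 0 <= Ir by apply: Rintegral_ge0 => u _; apply: o0.
have P1 : forall f, in_Homega rho omega f -> Lloc rho mu f -> forall x,
   `|f x - Sh rho plus theta mu h f x| <= Hnorm rho omega f / m * Ir.
  move=> f hf Lf x.
  have [HE H0 Hb] := Hnorm_props met hm two hf.
  have [mA muA] := trans _ x mB.
  have sub : plus x @` Bh rho theta h `<=` rball rho x h.
    move=> _ [u Bu <-]; rewrite /rball /= rs; apply: le_lt_trans (rplus x u) _.
    by rewrite rs.
  have mbx := meas_ball hst x h.
  have fA : mu.-integrable (plus x @` Bh rho theta h) (EFin \o f) :=
    integrableS mbx mA sub (Lf x h h0).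
  have cA : mu.-integrable (plus x @` Bh rho theta h) (EFin \o (fun _ => f x)) :=
    integrableS mbx mA sub (cst_int hst (f x) x h0).
  have J := trint f x h h0 Lf.
  have Lg : Lloc rho mu (fun u => `|f x - f u|).
    move=> y r r0; have mb := meas_ball hst y r.
    apply: (integrable_norm (f := fun u => f x - f u)).
    apply: (eq_integrable mb _ _ _ (integrableB mb (cst_int hst (f x) y r0) (Lf y r r0))).
    by move=> u _ /=; rewrite EFinB.
  have J2 := trint _ x h h0 Lg.
  have gA : mu.-integrable (plus x @` Bh rho theta h) (EFin \o (fun u => f x - f u)).
    apply: (eq_integrable mA _ _ _ (integrableB mA cA fA)).
    by move=> u _ /=; rewrite EFinB.
  have RA : Rintegral mu (plus x @` Bh rho theta h) (fun u => f x - f u) =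
      f x * m - Rintegral mu (plus x @` Bh rho theta h) f.
    by rewrite RintegralB // Rintegral_cst // muA.
  have ZI : mu.-integrable (Bh rho theta h)
      (EFin \o (fun u => Hnorm rho omega f * om u)).
    apply: (eq_integrable mB _ _ _ (integrableZl mB (Hnorm rho omega f) omI)).
    by move=> u _ /=; rewrite EFinM.
  have step : Rintegral mu (Bh rho theta h) (fun u => `|f x - f (plus x u)|) <=
      Hnorm rho omega f * Ir.
    rewrite -RintegralZl //; rewrite /Rintegral; apply: fine_le.
    - rewrite J2; apply: integrable_fin_num => //.
      exact: integrableS mbx mA sub (Lg x h h0).
    - exact: integrable_fin_num.
    apply: nm_le_integral => u Bu; first by rewrite lee_fin.
    rewrite lee_fin distrC; apply: le_trans (Hb _ _) _.
    by apply: ler_wpM2l => //; apply: hmono => //; apply: rplus.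
  rewrite /Sh -/m.
  have -> : Rintegral mu (Bh rho theta h) (fun u => f (plus x u)) =
      Rintegral mu (plus x @` Bh rho theta h) f by rewrite /Rintegral J.
  have -> : f x - m^-1 * Rintegral mu (plus x @` Bh rho theta h) f =
      m^-1 * (f x * m - Rintegral mu (plus x @` Bh rho theta h) f).
    by rewrite mulrBr mulrCA mulVf ?mulr1 // gt_eqF.
  rewrite normrM (@ger0_norm _ m^-1); last by rewrite invr_ge0 ltW.
  rewrite -RA.
  have -> : Hnorm rho omega f / m * Ir = m^-1 * (Hnorm rho omega f * Ir).
    by rewrite mulrCA mulrA.
  apply: ler_wpM2l; first by rewrite invr_ge0 ltW.
  apply: le_trans (le_normr_Rintegral mA gA) _.
  apply: le_trans step; rewrite le_eqVlt; apply/orP; left; apply/eqP.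
  by rewrite /Rintegral J2.
split.
  move=> f hf Lf; rewrite IE -EFinM; apply: ge_ereal_sup => _ [x _ <-].
  by rewrite lee_fin P1.
move=> c sgn hs fw.
have sgn1 : `|sgn| = 1 by case: hs => ->; rewrite ?normrN normr1.
have hsub : forall s t, 0 <= s -> 0 <= t -> omega (s + t) <= omega s + omega t.
  by case: hm.
have rtt : rho theta theta = 0 by apply/(proj2 (r00 theta theta)).
have om0 : omega 0 = 0 by case: hm.
have omt : om theta = 0 by rewrite /om rtt om0.
have difw : forall x y, fw x - fw y = sgn * (om x - om y).
  by move=> x y; rewrite /fw /om mulrBr opprD addrACA subrr add0r.
have Hbound : forall x y, `|om x - om y| <= omega (rho x y).
  move=> x y; rewrite ler_norml; apply/andP; split.
    rewrite lerNl opprB lerBlDr /om.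
    apply: le_trans (hsub _ _ (rp _ _) (rp _ _)); apply: hmono => //.
    by rewrite (rs x y); apply: rt.
  rewrite lerBlDr /om.
  apply: le_trans (hsub _ _ (rp _ _) (rp _ _)); apply: hmono => //.
have HE1 : Hnorm_e rho omega fw = 1%:E.
  apply/eqP; rewrite eq_le; apply/andP; split.
    apply: ge_ereal_sup => _ [x [y [xy ->]]].
    rewrite lee_fin difw normrM sgn1 mul1r ler_pdivrMr ?mul1r.
      exact: Hbound.
    by apply: (omega_pos hm); apply: (rho_pos met).
  apply: ereal_sup_ubound; exists u0, theta; split => //; congr EFin.
  rewrite difw omt subr0 normrM sgn1 mul1r ger0_norm ?o0 // divff //.
  by rewrite gt_eqF //; apply: (omega_pos hm); apply: (rho_pos met).
have hf : in_Homega rho omega fw by rewrite /in_Homega HE1 ltry.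
have Hn1 : Hnorm rho omega fw = 1 by rewrite /Hnorm HE1.
have Lw : Lloc rho mu fw.
  move=> y r r0; have mb := meas_ball hst y r.
  apply: (eq_integrable mb _ _ _ (integrableD mb (cst_int hst c y r0)
     (integrableZl mb sgn (om_int hst hm y r0)))).
  by move=> u _ /=; rewrite EFinD EFinM.
split => //.
rewrite Hn1 IE -EFinM; apply/eqP; rewrite eq_le; apply/andP; split.
  apply: ge_ereal_sup => _ [x _ <-]; rewrite lee_fin.
  by have := P1 fw hf Lw x; rewrite Hn1.
apply: ereal_sup_ubound; exists theta => //; congr EFin.
rewrite /Sh -/m.
have cI := cst_int hst c theta h0.
have sI : mu.-integrable (Bh rho theta h) (EFin \o (fun u => sgn * om u)).
  apply: (eq_integrable mB _ _ _ (integrableZl mB sgn omI)).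
  by move=> u _ /=; rewrite EFinM.
have -> : Rintegral mu (Bh rho theta h) (fun u => fw (plus theta u)) =
    c * m + sgn * Ir.
  rewrite (@eq_Rintegral _ _ _ mu _ (fun u => c + sgn * om u)); last first.
    by move=> u _; rewrite /fw /om pC p0.
  by rewrite RintegralD // Rintegral_cst // RintegralZl.
have -> : fw theta = c by rewrite /fw rtt om0 mulr0 addr0.
rewrite mulrDr mulrCA mulVf ?gt_eqF // mulr1 opprD addrA subrr add0r normrN.
rewrite normrM (@ger0_norm _ m^-1); last by rewrite invr_ge0 ltW.
by rewrite normrM sgn1 mul1r (ger0_norm Ir0) mul1r.
Qed.
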